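(* Let $\lambda>1$, $0<\alpha<1$, $0<r_0<1$, $C_1=\frac{2\alpha\log\lambda}{r_0^\alpha}$, and let $s(t)=(s_1(t),s_2(t))$, $t\in[0,T]$, and $T_1=T/2$ be as follows: $s$ solves $\dot s_1=s_1\psi(s_1^2+s_2^2)\log\lambda$, $\dot s_2=-s_2\psi(s_1^2+s_2^2)\log\lambda$, $[0,T]$ is the maximal time interval on which $s(t)\in D_{r_0/2}$, $|s_1(t)|\le|s_2(t)|$ on $[0,T_1]$ and $|s_1(t)|\ge|s_2(t)|$ on $[T_1,T]$. Let $\tilde s(t)$ be another solution of the same system and $\Delta s_i(t)=\tilde s_i(t)-s_i(t)$, $\Delta s=(\Delta s_1,\Delta s_2)$. Given $0<\mu<1$, assume that $s_1(t)\ne0\ne s_2(t)$ and (1) $\Delta s_2(t)>0$ and $|\Delta s_1(t)|\le\mu\Delta s_2(t)$ for $t\in[0,T]$; (2) $\big|\frac{\Delta s_2(0)}{s_2(0)}\big|<\frac{1-\mu}{72}$. Then, with $\beta=\frac{1-\mu}{2^{\alpha+2}}$, $$\Delta s_2(t)\le\frac{\Delta s_2(0)}{s_2(0)}s_2(t)\big(1+2^\alpha C_1|s_2(0)|^{2\alpha}t\big)^{-\beta},\quad 0\le t\le T_1;$$ $$\Delta s_2(t)\le\frac{\Delta s_2(T_1)}{s_1(T_1)}s_1(t)\big(1-2^\alpha C_1|s_1(T_1)|^{2\alpha}(t-T_1)\big)^{-\beta},\quad T_1\le t\le T.$$ In addition, $\|\Delta s(T)\|\le\sqrt{1+\mu^2}\,\frac{s_1(T)}{s_2(0)}\|\Delta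 s(0)\|$.
   Context: Here $D_r=\{(s_1,s_2):s_1^2+s_2^2\le r\}$ and $\psi:[0,1]\to[0,1]$ is a function with $\psi(u)=(u/r_0)^\alpha$ for $0\le u\le r_0/2$ (and $C^\infty$ away from $0$, $\psi=1$ on $[r_0,1]$, $\psi'>0$ decreasing on $(0,r_0)$). The norm is the Euclidean norm in the coordinates $(s_1,s_2)$. *)

(* Defs.v *)
From Stdlib Require Import Reals.
From Coquelicot Require Import Coquelicot.
Open Scope R_scope.

(* Standing assumptions on psi : [0,1] -> [0,1] (psi is given as a total
   function R -> R; only its values on [0,1] matter). *)
Definition admissible_psi (r0 alpha : R) (psi : R -> R) : Prop :=
  (forall u, 0 <= u <= 1 -> 0 <= psi u <= 1) /\
  psi 0 = 0 /\
  (forall u, 0 < u <= r0 / 2 -> psi u = Rpower (u / r0) alpha) /\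
  (forall n u, 0 < u < 1 -> ex_derive_n psi n u) /\
  (forall u, r0 <= u <= 1 -> psi u = 1) /\
  (forall u, 0 < u < r0 -> 0 < Derive psi u) /\
  (forall u v, 0 < u -> u < v -> v < r0 -> Derive psi v < Derive psi u).

Definition inD (r a b : R) : Prop := a ^ 2 + b ^ 2 <= r.

Definition solves_at (psi : R -> R) (lam : R) (s1 s2 : R -> R) (t : R) : Prop :=
  is_derive s1 t (s1 t * psi (s1 t ^ 2 + s2 t ^ 2) * ln lam) /\
  is_derive s2 t (- (s2 t * psi (s1 t ^ 2 + s2 t ^ 2) * ln lam)).

Definition eucl_norm (a b : R) : R := sqrt (a ^ 2 + b ^ 2).

(* Main.v *)
Require Import Defs.
From Stdlib Require Import Reals Lra Psatz Classical.
From Coquelicot Require Import Coquelicot.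
Open Scope R_scope.

Lemma real_ind (P : R -> Prop) (a b : R) :
  a <= b -> P a ->
  (forall t, a <= t < b -> (forall s, a <= s <= t -> P s) ->
     exists d, 0 < d /\ forall s, t <= s <= t + d -> s <= b -> P s) ->
  (forall t, a < t <= b -> (forall s, a <= s < t -> P s) -> P t) ->
  forall t, a <= t <= b -> P t.
Proof.
  intros Hab Pa Hstep Hleft.
  set (E := fun x => a <= x <= b /\ forall s, a <= s <= x -> P s).
  assert (HE : bound E) by (exists b; intros x [Hx _]; lra).
  assert (HEa : exists x, E x).
  { exists a; split; [lra|]. intros s Hs. replace s with a by lra. exact Pa. }
  destruct (completeness E HE HEa) as [tau [Hub Hlub]].
  assert (Hat : a <= tau) by (apply Hub; destruct HEa; unfold E; split; [lra|];
     intros s Hs; replace s with a by lra; exact Pa).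
  assert (Htb : tau <= b) by (apply Hlub; intros x [Hx _]; lra).
  assert (Hbelow : forall s, a <= s < tau -> P s).
  { intros s Hs. destruct (classic (exists x, E x /\ s < x)) as [[x [[_ Hx] Hsx]]|Hn].
    - apply Hx; lra.
    - exfalso. assert (tau <= s); [|lra]. apply Hlub. intros x Ex.
      destruct (Rle_dec x s) as [|Hxs]; [lra|]. exfalso; apply Hn; exists x; split; auto; lra. }
  assert (Ptau : P tau).
  { destruct (Req_dec tau a) as [->|Hne]; [exact Pa|]. apply Hleft; [lra|exact Hbelow]. }
  assert (Hall : forall s, a <= s <= tau -> P s).
  { intros s Hs. destruct (Req_dec s tau) as [->|]; [exact Ptau|]. apply Hbelow; lra. }
  destruct (Req_dec tau b) as [<-|Hne].
  - exact Hall.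
  - destruct (Hstep tau ltac:(lra) Hall) as [d [Hd Hd2]].
    assert (Hx : E (Rmin b (tau + d/2))).
    { split. split; [unfold Rmin; destruct Rle_dec; lra| apply Rmin_l].
      intros s Hs. destruct (Rle_dec s tau). apply Hall; lra.
      apply Hd2. split; [lra|]. assert (Rmin b (tau + d/2) <= tau + d/2) by apply Rmin_r. lra.
      assert (Rmin b (tau + d/2) <= b) by apply Rmin_l. lra. }
    specialize (Hub _ Hx). unfold Rmin in Hub; destruct Rle_dec; lra.
Qed.


Lemma cont_eps (f : R -> R) t l : is_derive f t l ->
  forall eps, 0 < eps -> exists d, 0 < d /\ forall s, Rabs (s - t) < d -> Rabs (f s - f t) < eps.
Proof.
  intros H eps He.
  assert (Hc : continuity_pt f t).
  { apply continuity_pt_filterlim. apply (ex_derive_continuous f). exists l; exact H. }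
  destruct (Hc eps He) as [d [Hd H2]]. exists d; split; auto.
  intros s Hs. destruct (Req_dec s t) as [->|Hne].
  rewrite Rminus_eq_0, Rabs_R0; lra.
  apply (H2 s). split. split. exact I. auto. exact Hs.
Qed.

Lemma mvt_open (f df : R -> R) a b : a < b ->
  (forall t, a <= t <= b -> is_derive f t (df t)) ->
  exists c, a < c < b /\ f b - f a = df c * (b - a).
Proof.
  intros Hab H. destruct (MVT_cor2 f df a b Hab) as [c [Hc1 Hc2]].
  intros c Hc. apply is_derive_Reals, H; auto.
  exists c; split; auto.
Qed.

Lemma boot (f df : R -> R) a b M : a <= b ->
  (forall t, a <= t <= b -> is_derive f t (df t)) -> f a < M ->
  (forall t, a <= t <= b -> f t < M -> df t <= 0) ->
  forall t, a <= t <= b -> f t <= f a.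
Proof.
  intros Hab Hd HM Hneg.
  apply (real_ind (fun t => f t <= f a) a b Hab (Rle_refl _)).
  - intros t Ht Hall.
    assert (Hft : f t <= f a) by (apply Hall; lra).
    destruct (cont_eps f t (df t) (Hd t ltac:(lra)) (M - f t) ltac:(lra)) as [d [Hd0 Hd1]].
    exists (d/2); split; [lra|]. intros s Hs Hsb.
    destruct (Req_dec s t) as [->|Hne]; [auto|].
    destruct (mvt_open f df t s ltac:(lra)) as [c [Hc1 Hc2]].
    { intros x Hx; apply Hd; lra. }
    assert (df c <= 0).
    { apply Hneg; [lra|]. assert (Rabs (c - t) < d) by (rewrite Rabs_right; lra).
      specialize (Hd1 c H). apply Rabs_def2 in Hd1. lra. }
    assert (df c * (s - t) <= 0) by (apply Rmult_le_0_r; lra). lra.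
  - intros t Ht Hall. destruct (Rle_dec (f t) (f a)) as [|Hn]; auto. exfalso.
    destruct (cont_eps f t (df t) (Hd t ltac:(lra)) (f t - f a) ltac:(lra)) as [d [Hd0 Hd1]].
    set (s := Rmax a (t - d/2)).
    assert (Hs1 : a <= s) by apply Rmax_l.
    assert (Hs2 : s < t) by (unfold s, Rmax; destruct Rle_dec; lra).
    assert (Hs3 : t - d/2 <= s) by apply Rmax_r.
    specialize (Hall s ltac:(lra)).
    assert (Rabs (s - t) < d) by (rewrite Rabs_left; lra).
    specialize (Hd1 s H). apply Rabs_def2 in Hd1. lra.
Qed.

Lemma sign_const (g dg : R -> R) a b : a <= b ->
  (forall t, a <= t <= b -> is_derive g t (dg t)) ->
  (forall t, a <= t <= b -> g t <> 0) ->
  forall t, a <= t <= b -> 0 < g t * g a.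
Proof.
  intros Hab Hd Hnz.
  assert (Ha : 0 < g a * g a).
  { assert (g a <> 0) by (apply Hnz; lra). nra. }
  apply (real_ind (fun t => 0 < g t * g a) a b Hab Ha).
  - intros t Ht Hall.
    assert (Hft : 0 < g t * g a) by (apply Hall; lra).
    assert (Hgt : g t <> 0) by (apply Hnz; lra).
    destruct (cont_eps g t (dg t) (Hd t ltac:(lra)) (Rabs (g t)) ltac:(apply Rabs_pos_lt; auto)) as [d [Hd0 Hd1]].
    exists (d/2); split; [lra|]. intros s Hs Hsb.
    assert (Rabs (s - t) < d) by (rewrite Rabs_right; lra).
    specialize (Hd1 s H). apply Rabs_def2 in Hd1.
    destruct (Rlt_dec 0 (g t)).
    + rewrite Rabs_right in Hd1 by lra. assert (0 < g s) by lra. nra.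
    + rewrite Rabs_left in Hd1 by lra. assert (g s < 0) by lra. nra.
  - intros t Ht Hall.
    assert (Hgt : g t <> 0) by (apply Hnz; lra).
    destruct (cont_eps g t (dg t) (Hd t ltac:(lra)) (Rabs (g t)) ltac:(apply Rabs_pos_lt; auto)) as [d [Hd0 Hd1]].
    set (s := Rmax a (t - d/2)).
    assert (Hs1 : a <= s) by apply Rmax_l.
    assert (Hs2 : s < t) by (unfold s, Rmax; destruct Rle_dec; lra).
    assert (Hs3 : t - d/2 <= s) by apply Rmax_r.
    specialize (Hall s ltac:(lra)).
    assert (Rabs (s - t) < d) by (rewrite Rabs_left; lra).
    specialize (Hd1 s H). apply Rabs_def2 in Hd1.
    destruct (Rlt_dec 0 (g t)).
    + rewrite Rabs_right in Hd1 by lra. assert (0 < g s) by lra. nra.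
    + rewrite Rabs_left in Hd1 by lra. assert (g s < 0) by lra. nra.
Qed.


Lemma rp_pos x e : 0 < Rpower x e.
Proof. unfold Rpower; apply exp_pos. Qed.

Lemma rp_dec_neg a b e : 0 < a <= b -> e <= 0 -> Rpower b e <= Rpower a e.
Proof.
  intros [Ha Hab] He. unfold Rpower.
  destruct (Req_dec a b) as [->|]; [lra|].
  assert (ln a < ln b) by (apply ln_increasing; lra).
  destruct (Req_dec e 0) as [->|]. rewrite !Rmult_0_l; lra.
  apply Rlt_le, exp_increasing. nra.
Qed.

Lemma rp_inc a b e : 0 < a <= b -> 0 <= e -> Rpower a e <= Rpower b e.
Proof. intros; apply Rle_Rpower_l; auto. Qed.

Lemma rp_ge_base z e : 0 < z <= 1 -> 0 <= e <= 1 -> z <= Rpower z e.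
Proof.
  intros Hz He. rewrite <- (Rpower_1 z) at 1 by lra. unfold Rpower.
  assert (ln z <= 0).
  { destruct (Req_dec z 1) as [->|]. rewrite ln_1; lra. left; rewrite <- ln_1; apply ln_increasing; lra. }
  apply exp_le_exp || idtac.
  destruct (Req_dec (1 * ln z) (e * ln z)) as [<-|]; [lra|].
  left; apply exp_increasing; nra.
Qed.

Lemma rp_mul x y e : 0 < x -> 0 < y -> Rpower (x * y) e = Rpower x e * Rpower y e.
Proof. intros; rewrite Rpower_mult_distr; auto. Qed.

Lemma rp_shift x e : 0 < x -> Rpower x (e - 1) * x = Rpower x e.
Proof.
  intros Hx. rewrite <- (Rpower_1 x) at 2 by auto. rewrite <- Rpower_plus. f_equal; ring.
Qed.

Lemma rp_concave a b al : 0 < a < b -> 0 < al < 1 ->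
  al * Rpower b (al - 1) * (b - a) <= Rpower b al - Rpower a al /\
  Rpower b al - Rpower a al <= al * Rpower a (al - 1) * (b - a).
Proof.
  intros Hab Hal.
  destruct (MVT_cor2 (fun x => Rpower x al) (fun x => al * Rpower x (al - 1)) a b ltac:(lra))
    as [c [Hc1 Hc2]].
  { intros c Hc. apply derivable_pt_lim_power. lra. }
  rewrite Hc1.
  assert (Rpower b (al - 1) <= Rpower c (al - 1)) by (apply rp_dec_neg; lra).
  assert (Rpower c (al - 1) <= Rpower a (al - 1)) by (apply rp_dec_neg; lra).
  split; apply Rmult_le_compat_r; try lra; apply Rmult_le_compat_l; lra.
Qed.

Lemma ln2_gt : 3/5 < ln 2.
Proof.
  assert (He : exp 1 <= 3) by apply exp_le_3.
  assert (H3 : exp 3 = exp 1 * exp 1 * exp 1).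
  { rewrite <- !exp_plus. f_equal; ring. }
  assert (H5 : exp 3 = exp (3/5) * exp (3/5) * exp (3/5) * exp (3/5) * exp (3/5)).
  { rewrite <- !exp_plus. f_equal; field. }
  assert (Hp : 0 < exp (3/5)) by apply exp_pos.
  assert (Hlt : exp (3/5) < 2).
  { assert (exp 3 <= 27).
    { rewrite H3. assert (0 < exp 1) by apply exp_pos.
      assert (exp 1 * exp 1 <= 9) by nra. nra. }
    destruct (Rlt_dec (exp (3/5)) 2) as [|Hn]; auto. exfalso.
    assert (2 <= exp (3/5)) by lra.
    assert (4 <= exp (3/5) * exp (3/5)) by nra.
    assert (16 <= exp (3/5) * exp (3/5) * exp (3/5) * exp (3/5)) by nra.
    assert (32 <= exp (3/5) * exp (3/5) * exp (3/5) * exp (3/5) * exp (3/5)) by nra.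
    lra. }
  rewrite <- (ln_exp (3/5)). apply ln_increasing; auto.
Qed.

Lemma ln2_lt1 : ln 2 < 1.
Proof.
  assert (2 < exp 1) by (assert (H := exp_ineq1 1 ltac:(lra)); lra).
  rewrite <- (ln_exp 1). apply ln_increasing; lra.
Qed.

Lemma alpha_bound al : 0 < al < 1 -> al * Rpower 2 (1 - al) <= 1.
Proof.
  intros Hal.
  assert (H : al <= Rpower 2 (al - 1)).
  { unfold Rpower. assert (H1 := exp_ineq1_le ((al - 1) * ln 2)).
    assert (0 < ln 2) by (assert (H2 := ln2_gt); lra).
    assert (H3 := ln2_lt1). nra. }
  assert (Hm : Rpower 2 (al - 1) * Rpower 2 (1 - al) = 1).
  { rewrite <- Rpower_plus. replace (al - 1 + (1 - al)) with 0 by ring. apply Rpower_O; lra. }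
  assert (0 < Rpower 2 (1 - al)) by apply rp_pos. nra.
Qed.

Lemma one_minus_pow U al : 0 < U <= 1/2 -> 0 < al -> al * (3/5) * Rpower U al <= 1 - Rpower U al.
Proof.
  intros HU Hal.
  assert (Hl : ln U <= - ln 2).
  { rewrite <- ln_Rinv by lra. destruct (Req_dec U (/2)) as [->|].
    lra. left; apply ln_increasing; lra. }
  assert (H2 := ln2_gt).
  assert (Hm : Rpower U al * exp (- (al * ln U)) = 1).
  { unfold Rpower. rewrite <- exp_plus. replace (al * ln U + - (al * ln U)) with 0 by ring. apply exp_0. }
  assert (H1 := exp_ineq1_le (- (al * ln U))).
  assert (0 < Rpower U al) by apply rp_pos.
  assert (Rpower U al * (1 + - (al * ln U)) <= 1) by (rewrite <- Hm; apply Rmult_le_compat_l; lra).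
  assert (al * (3/5) <= - (al * ln U)) by nra.
  assert (Rpower U al * (al * (3/5)) <= Rpower U al * (- (al * ln U))) by (apply Rmult_le_compat_l; lra).
  nra.
Qed.


Section Psi.
Variables (r0 al : R) (psi : R -> R).
Hypothesis Hr0 : 0 < r0 < 1.
Hypothesis Hal : 0 < al < 1.
Hypothesis Hpsi : admissible_psi r0 al psi.

Lemma psi_f u : 0 < u <= r0 / 2 -> psi u = Rpower (u / r0) al.
Proof. destruct Hpsi as [_ [_ [Hf _]]]. apply Hf. Qed.

Lemma psi_range u : 0 <= u <= 1 -> 0 <= psi u <= 1.
Proof. destruct Hpsi as [Hf _]. apply Hf. Qed.

Lemma psi_isd x : 0 < x < 1 -> is_derive psi x (Derive psi x).
Proof.
  intros Hx. destruct Hpsi as [_ [_ [_ [Hs _]]]].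
  specialize (Hs 1%nat x Hx). simpl in Hs. apply Derive_correct. exact Hs.
Qed.

Lemma psi_der_f x : 0 < x < r0 / 2 -> Derive psi x = al / r0 * Rpower (x / r0) (al - 1).
Proof.
  intros Hx.
  assert (H1 : is_derive (fun y => Rpower (y / r0) al) x (al / r0 * Rpower (x / r0) (al - 1))).
  { assert (Hc : is_derive (fun y => y / r0) x (/ r0)).
    { auto_derive. lra. field. lra. }
    assert (Hp : is_derive (fun y => Rpower y al) (x / r0) (al * Rpower (x / r0) (al - 1))).
    { apply is_derive_Reals. apply derivable_pt_lim_power. apply Rdiv_lt_0_compat; lra. }
    replace (al / r0 * Rpower (x / r0) (al - 1)) with (/ r0 * (al * Rpower (x / r0) (al - 1))) by (unfold Rdiv; ring).
    apply (is_derive_comp (fun y => Rpower y al) (fun y => y / r0)); auto. }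
  assert (H2 : is_derive psi x (al / r0 * Rpower (x / r0) (al - 1))).
  { apply (is_derive_ext_loc (fun y => Rpower (y / r0) al)); auto.
    assert (He : 0 < Rmin x (r0 / 2 - x)) by (apply Rmin_pos; lra).
    exists (mkposreal _ He). intros y Hy. simpl in Hy.
    unfold ball in Hy; simpl in Hy; unfold AbsRing_ball, abs, minus, plus, opp in Hy; simpl in Hy.
    assert (Hm1 := Rmin_l x (r0/2 - x)). assert (Hm2 := Rmin_r x (r0/2 - x)).
    apply Rabs_def2 in Hy. symmetry. apply psi_f. lra. }
  apply is_derive_unique; auto.
Qed.

Lemma psi_mvt a b : 0 < a < b -> b < 1 -> exists c, a < c < b /\ psi b - psi a = Derive psi c * (b - a).
Proof.
  intros Hab Hb. apply mvt_open; [lra|]. intros t Ht. apply psi_isd; lra.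
Qed.

Lemma psi_dpos x : 0 < x < r0 -> 0 < Derive psi x.
Proof. destruct Hpsi as [_ [_ [_ [_ [_ [Hp _]]]]]]. apply Hp. Qed.

Lemma psi_ddec u v : 0 < u -> u < v -> v < r0 -> Derive psi v < Derive psi u.
Proof. destruct Hpsi as [_ [_ [_ [_ [_ [_ Hd]]]]]]. apply Hd. Qed.

Lemma psi_mono a b : 0 <= a <= b -> b < r0 -> psi a <= psi b.
Proof.
  intros Hab Hb.
  destruct (Req_dec a b) as [->|Hne]; [lra|].
  destruct (Req_dec a 0) as [->|Ha0].
  - destruct Hpsi as [_ [H0 _]]. rewrite H0. apply psi_range; lra.
  - destruct (psi_mvt a b) as [c [Hc1 Hc2]]; try lra.
    assert (0 < Derive psi c) by (apply psi_dpos; lra).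
    assert (0 <= Derive psi c * (b - a)) by (apply Rmult_le_pos; lra). lra.
Qed.

Lemma psi_chord u v : 0 < u < v -> v < r0 -> (v - u) * (1 - psi u) <= (psi v - psi u) * (r0 - u).
Proof.
  intros Huv Hv.
  assert (H1 : psi r0 = 1) by (destruct Hpsi as [_ [_ [_ [_ [H1 _]]]]]; apply H1; lra).
  destruct (psi_mvt u v) as [c1 [Hc1 Hc1']]; try lra.
  destruct (psi_mvt v r0) as [c3 [Hc3 Hc3']]; try lra.
  assert (Derive psi c3 < Derive psi c1) by (apply psi_ddec; lra).
  rewrite H1 in Hc3'.
  replace (1 - psi u) with ((1 - psi v) + (psi v - psi u)) by ring.
  rewrite Hc3', Hc1'.
  assert (0 <= (v - u) * (r0 - v)) by (apply Rmult_le_pos; lra).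
  assert ((v - u) * (r0 - v) * (Derive psi c3 - Derive psi c1) <= 0) by (apply Rmult_le_0_l; lra).
  nra.
Qed.

Lemma psi_upper u v : 0 < u < v -> v < r0 ->
  psi v - psi u <= al / r0 * Rpower (u / 2 / r0) (al - 1) * (v - u).
Proof.
  intros Huv Hv.
  destruct (psi_mvt u v) as [c [Hc Hc']]; try lra.
  rewrite Hc'. apply Rmult_le_compat_r; [lra|].
  rewrite <- psi_der_f by lra. left. apply psi_ddec; lra.
Qed.

End Psi.


Lemma rp_scale_lo x c e : 0 < x -> 0 < c <= 1 -> -1 <= e <= 0 ->
  Rpower (c * x) e <= Rpower x e / c.
Proof.
  intros Hx Hc He. rewrite rp_mul by lra.
  assert (Rpower c e <= / c).
  { rewrite <- (Rpower_1 c) at 2 by lra. rewrite <- Rpower_Ropp. unfold Rpower.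
    assert (ln c <= 0).
    { destruct (Req_dec c 1) as [->|]. rewrite ln_1; lra. left; rewrite <- ln_1; apply ln_increasing; lra. }
    destruct (Req_dec (e * ln c) (- 1 * ln c)) as [Heq|]; [right; rewrite Heq; f_equal; ring|]. left; apply exp_increasing.
    assert ((e + 1) * ln c <= 0) by (apply Rmult_le_0_l; lra). lra. }
  assert (0 < Rpower x e) by apply rp_pos. unfold Rdiv.
  nra.
Qed.

Lemma rp_scale_hi x c e : 0 < x -> 1 <= c -> -1 <= e <= 0 ->
  Rpower x e / c <= Rpower (c * x) e.
Proof.
  intros Hx Hc He. rewrite rp_mul by lra.
  assert (/ c <= Rpower c e).
  { rewrite <- (Rpower_1 c) at 1 by lra. rewrite <- Rpower_Ropp. apply Rle_Rpower; lra. }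
  assert (0 < Rpower x e) by apply rp_pos. unfold Rdiv.
  nra.
Qed.

Lemma rp_abs2 a r al : a <> 0 -> 0 < r ->
  Rpower (Rabs a) (2 * al) = Rpower (a ^ 2 / r) al * Rpower r al.
Proof.
  intros Ha Hr. rewrite <- rp_mul.
  replace (a ^ 2 / r * r) with (Rpower (Rabs a) 2).
  rewrite Rpower_mult. f_equal; ring.
  replace 2 with (INR 2) by (simpl; ring). rewrite Rpower_pow by (apply Rabs_pos_lt; auto).
  rewrite pow2_abs. field. lra.
  apply Rdiv_lt_0_compat; auto. apply pow2_gt_0; auto. auto.
Qed.

Lemma rp_half U al : 0 < U -> 0 < al < 1 -> al * Rpower (U / 2) (al - 1) <= Rpower U (al - 1).
Proof.
  intros HU Hal.
  replace (U / 2) with (/ 2 * U) by (field).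
  rewrite rp_mul by lra.
  assert (Rpower (/ 2) (al - 1) = Rpower 2 (1 - al)).
  { unfold Rpower. rewrite ln_Rinv by lra. f_equal; ring. }
  rewrite H. assert (H2 := alpha_bound al Hal). assert (0 < Rpower U (al - 1)) by apply rp_pos.
  nra.
Qed.


Section K.
Variables (r0 al : R) (psi : R -> R).
Hypothesis Hr0 : 0 < r0 < 1.
Hypothesis Hal : 0 < al < 1.
Hypothesis Hpsi : admissible_psi r0 al psi.

Lemma K1 a1 a2 d1 d2 mu : 0 < mu < 1 -> a2 <> 0 -> a1 ^ 2 <= a2 ^ 2 ->
  a1 ^ 2 + a2 ^ 2 <= r0 / 2 -> Rabs d1 <= mu * d2 -> 0 < d2 ->
  d2 <= (1 - mu) / 72 * Rabs a2 ->
  d2 * (1 - mu) * al * Rpower (a2 ^ 2 / r0) al / 2 <=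
  (a2 + d2) * (psi ((a1 + d1) ^ 2 + (a2 + d2) ^ 2) - psi (a1 ^ 2 + a2 ^ 2)).
Proof.
  intros Hmu Ha2 H12 Hu Hd1 Hd2 Hsmall.
  set (u := a1 ^ 2 + a2 ^ 2) in *.
  set (v := (a1 + d1) ^ 2 + (a2 + d2) ^ 2).
  set (S := a2 ^ 2 / r0).
  set (U := u / r0). set (V := v / r0).
  assert (HA2 : 0 < Rabs a2) by (apply Rabs_pos_lt; auto).
  assert (Ha2sq : Rabs a2 ^ 2 = a2 ^ 2) by apply pow2_abs.
  assert (Ha1 : Rabs a1 <= Rabs a2).
  { apply Rsqr_incr_0_var. unfold Rsqr. rewrite <- !Rabs_mult. rewrite !Rabs_right. simpl in H12; lra.
    apply Rle_ge; nra. apply Rle_ge; nra. apply Rabs_pos. }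
  assert (Hprod : Rabs (a1 * d1) <= mu * Rabs a2 * d2).
  { rewrite Rabs_mult. assert (0 <= Rabs d1) by apply Rabs_pos. assert (0 <= Rabs a1) by apply Rabs_pos. nra. }
  assert (Hp1 : - (mu * Rabs a2 * d2) <= a1 * d1 <= mu * Rabs a2 * d2).
  { split; [apply Ropp_le_cancel; rewrite Ropp_involutive|]; (eapply Rle_trans; [|apply Hprod]);
      [rewrite <- Rabs_Ropp; apply RRle_abs| apply RRle_abs]. }
  assert (Hd1sq : d1 ^ 2 <= d2 ^ 2).
  { rewrite <- (pow2_abs d1). assert (0 <= Rabs d1) by apply Rabs_pos. apply pow_incr. nra. }
  assert (Hupos : 0 < u) by (unfold u; assert (0 < a2 ^ 2) by (apply pow2_gt_0; auto); nra).
  assert (Hu2 : a2 ^ 2 <= u) by (unfold u; nra).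
  assert (Hu3 : u <= 2 * a2 ^ 2) by (unfold u; nra).
  assert (Hvu : v - u = 2 * (a1 * d1) + d1 ^ 2 + 2 * a2 * d2 + d2 ^ 2) by (unfold v, u; ring).
  assert (Hk : d2 * Rabs a2 <= (1 - mu) / 72 * a2 ^ 2).
  { rewrite <- Ha2sq. replace ((1 - mu) / 72 * Rabs a2 ^ 2) with ((1 - mu) / 72 * Rabs a2 * Rabs a2) by ring.
    apply Rmult_le_compat_r; lra. }
  assert (Hk2 : d2 ^ 2 <= (1 - mu) / 72 * d2 * Rabs a2).
  { replace (d2 ^ 2) with (d2 * d2) by ring.
    replace ((1 - mu) / 72 * d2 * Rabs a2) with (d2 * ((1 - mu) / 72 * Rabs a2)) by ring.
    apply Rmult_le_compat_l; lra. }
  assert (Ha2d : Rabs a2 * d2 = a2 * d2 \/ Rabs a2 * d2 = - (a2 * d2)).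
  { unfold Rabs; destruct Rcase_abs; [right|left]; ring. }
  assert (Hb1 : d2 * Rabs a2 <= 1/72 * u) by nra.
  assert (Hb2 : d2 ^ 2 <= 1/72 * u) by nra.
  assert (Hvu_up : v - u <= 6/100 * u).
  { rewrite Hvu. destruct Ha2d; nra. }
  assert (Hvu_lo : - (6/100 * u) <= v - u).
  { rewrite Hvu. assert (0 <= d1 ^ 2) by apply pow2_ge_0. destruct Ha2d; nra. }
  assert (HS : 0 < S) by (unfold S; apply Rdiv_lt_0_compat; [apply pow2_gt_0|]; lra).
  assert (HUpos : 0 < U) by (unfold U; apply Rdiv_lt_0_compat; lra).
  assert (HUhalf : U <= 1/2) by (unfold U; apply Rmult_le_reg_r with r0; [lra|]; unfold Rdiv; rewrite Rmult_assoc, Rinv_l; lra).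
  assert (HSU1 : S <= U) by (unfold S, U; unfold Rdiv; apply Rmult_le_compat_r; [left; apply Rinv_0_lt_compat|]; lra).
  assert (HSU2 : U <= 2 * S) by (unfold S, U; unfold Rdiv; rewrite <- Rmult_assoc; apply Rmult_le_compat_r; [left; apply Rinv_0_lt_compat|]; lra).
  assert (HSpow : Rpower S al <= 2 * S * Rpower U (al - 1)).
  { rewrite <- (rp_shift S al) by lra.
    assert (Rpower S (al - 1) <= Rpower (/2 * U) (al - 1)) by (apply rp_dec_neg; lra).
    assert (Rpower (/2 * U) (al - 1) <= Rpower U (al - 1) / (/2)) by (apply rp_scale_lo; lra).
    assert (Rpower U (al - 1) / (/ 2) = 2 * Rpower U (al - 1)) by field.
    nra. }
  assert (HUpow : Rpower U al = U * Rpower U (al - 1)) by (rewrite <- (rp_shift U al); lra || ring).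
  assert (HU1 : 0 < Rpower U (al - 1)) by apply rp_pos.
  assert (HP : 0 < al * (1 - mu) * d2) by (apply Rmult_lt_0_compat; [apply Rmult_lt_0_compat|]; lra).
  assert (Hvr0 : v < r0) by lra.
  assert (Hvpos : 0 < v) by lra.
  assert (HVdef : V - U = (v - u) / r0) by (unfold V, U; field; lra).
  assert (HVpos : 0 < V) by (unfold V; apply Rdiv_lt_0_compat; lra).
  assert (HpsiU : psi u = Rpower U al) by (apply (psi_f r0 al psi Hpsi); lra).
  destruct (Rlt_dec 0 a2) as [Hpos|Hneg].
  -
    assert (Habs : Rabs a2 = a2) by (apply Rabs_right; lra). rewrite Habs in *.
    assert (Hvu_pos : 2 * (1 - mu) * a2 * d2 <= v - u).
    { rewrite Hvu. assert (0 <= d1 ^ 2) by apply pow2_ge_0. assert (0 <= d2 ^ 2) by apply pow2_ge_0. nra. }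
    assert (Hinc : psi u <= psi v) by (apply (psi_mono r0 al psi Hr0 Hpsi); nra).
    assert (Hlow : a2 * (psi v - psi u) <= (a2 + d2) * (psi v - psi u)) by nra.
    eapply Rle_trans; [|exact Hlow].
    destruct (Rle_dec v (r0 / 2)) as [Hvsmall|Hvbig].
    + assert (HpsiV : psi v = Rpower V al) by (apply (psi_f r0 al psi Hpsi); lra).
      rewrite HpsiV, HpsiU.
      assert (Huv : u < v) by nra.
      assert (HUV : U < V) by (unfold U, V; unfold Rdiv; apply Rmult_lt_compat_r; [apply Rinv_0_lt_compat|]; lra).
      destruct (rp_concave U V al ltac:(lra) Hal) as [Hc _].
      assert (HV3 : V <= 3 * S).
      { unfold V, S. unfold Rdiv. rewrite <- Rmult_assoc. apply Rmult_le_compat_r; [left; apply Rinv_0_lt_compat; lra|]. lra. }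
      assert (HVp : Rpower S (al - 1) / 3 <= Rpower V (al - 1)).
      { eapply Rle_trans. apply rp_scale_hi; lra. apply rp_dec_neg; lra. }
      assert (HSal : Rpower S al = S * Rpower S (al - 1)) by (rewrite <- (rp_shift S al) by lra; ring).
      assert (HS1 : 0 < Rpower S (al - 1)) by apply rp_pos.
      assert (HVd : 2 * (1 - mu) * a2 * d2 / r0 <= V - U).
      { rewrite HVdef. unfold Rdiv. apply Rmult_le_compat_r; [left; apply Rinv_0_lt_compat|]; lra. }
      assert (HSa : 2 * (1 - mu) * a2 * d2 / r0 * a2 = 2 * (1 - mu) * d2 * S) by (unfold S; field; lra).
      assert (Hst1 : a2 * (al * Rpower V (al - 1) * (V - U)) <= a2 * (Rpower V al - Rpower U al)).
      { apply Rmult_le_compat_l; lra. }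
      assert (Hst2 : al * Rpower V (al - 1) * (2 * (1 - mu) * a2 * d2 / r0) * a2 <= a2 * (al * Rpower V (al - 1) * (V - U))).
      { assert (0 <= al * Rpower V (al - 1)) by (assert (0 < Rpower V (al - 1)) by apply rp_pos; nra).
        assert (al * Rpower V (al - 1) * (2 * (1 - mu) * a2 * d2 / r0) <= al * Rpower V (al - 1) * (V - U)).
        { apply Rmult_le_compat_l; lra. } nra. }
      assert (Hst3 : al * Rpower V (al - 1) * (2 * (1 - mu) * a2 * d2 / r0) * a2 = 2 * (al * (1 - mu) * d2) * S * Rpower V (al - 1)).
      { replace (al * Rpower V (al - 1) * (2 * (1 - mu) * a2 * d2 / r0) * a2) with (al * Rpower V (al - 1) * (2 * (1 - mu) * a2 * d2 / r0 * a2)) by ring.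
        rewrite HSa. ring. }
      assert (Hst4 : 2 * (al * (1 - mu) * d2) * S * (Rpower S (al - 1) / 3) <= 2 * (al * (1 - mu) * d2) * S * Rpower V (al - 1)).
      { apply Rmult_le_compat_l; [nra|lra]. }
      assert (Hfin : d2 * (1 - mu) * al * Rpower S al / 2 <= 2 * (al * (1 - mu) * d2) * S * (Rpower S (al - 1) / 3)).
      { rewrite HSal. assert (0 <= S * Rpower S (al - 1)) by nra.
        replace (d2 * (1 - mu) * al * (S * Rpower S (al - 1)) / 2) with ((al * (1 - mu) * d2) * (S * Rpower S (al - 1)) * (1/2)) by field.
        replace (2 * (al * (1 - mu) * d2) * S * (Rpower S (al - 1) / 3)) with ((al * (1 - mu) * d2) * (S * Rpower S (al - 1)) * (2/3)) by field.
        apply Rmult_le_compat_l; [nra|lra]. }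
      lra.
    + assert (Huv : u < v) by nra.
      assert (Hch := psi_chord r0 al psi Hr0 Hpsi u v ltac:(lra) Hvr0).
      rewrite HpsiU in Hch. rewrite HpsiU.
      assert (Hom := one_minus_pow U al ltac:(lra) ltac:(lra)).
      assert (HUbig : 5/11 <= U).
      { unfold U. apply Rmult_le_reg_r with r0; [lra|]. replace (u / r0 * r0) with u by (field; lra). lra. }
      assert (Hr0u : 0 < r0 - u) by lra.
      assert (Hr0u' : r0 - u = r0 * (1 - U)) by (unfold U; field; lra).
      assert (Hq1 : a2 * ((v - u) * (1 - Rpower U al)) <= a2 * ((psi v - Rpower U al) * (r0 - u))) by (apply Rmult_le_compat_l; lra).
      assert (HUal : 0 < Rpower U al) by apply rp_pos.
      assert (Hq2 : 2 * (1 - mu) * a2 * d2 * (al * (3/5) * Rpower U al) <= (v - u) * (1 - Rpower U al)).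
      { apply Rmult_le_compat; try lra. nra. nra. }
      assert (Hq3 : a2 * (2 * (1 - mu) * a2 * d2 * (al * (3/5) * Rpower U al)) <= a2 * ((psi v - Rpower U al) * (r0 - u))).
      { eapply Rle_trans; [|exact Hq1]. apply Rmult_le_compat_l; lra. }
      assert (Ha2S : a2 * a2 = S * r0) by (unfold S; field; lra).
      assert (Hq4 : a2 * (2 * (1 - mu) * a2 * d2 * (al * (3/5) * Rpower U al)) = (al * (1 - mu) * d2) * r0 * (6/5) * S * Rpower U al).
      { replace (a2 * (2 * (1 - mu) * a2 * d2 * (al * (3/5) * Rpower U al))) with ((a2 * a2) * (2 * (1 - mu) * d2 * (al * (3/5) * Rpower U al))) by ring.
        rewrite Ha2S. field. }
      assert (Hq5 : d2 * (1 - mu) * al * Rpower S al / 2 * (r0 - u) <= (al * (1 - mu) * d2) * r0 * (6/5) * S * Rpower U al).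
      { rewrite Hr0u', HUpow.
        assert (H2S : Rpower S al * (1 - U) <= 2 * S * Rpower U (al - 1) * (1 - U)) by (apply Rmult_le_compat_r; lra).
        assert (H2S' : 2 * S * Rpower U (al - 1) * (1 - U) <= (12/5) * S * (U * Rpower U (al - 1))).
        { assert (0 <= S * Rpower U (al - 1)) by nra. nra. }
        replace (d2 * (1 - mu) * al * Rpower S al / 2 * (r0 * (1 - U))) with ((al * (1 - mu) * d2) * r0 * (/2) * (Rpower S al * (1 - U))) by field.
        replace (al * (1 - mu) * d2 * r0 * (6 / 5) * S * (U * Rpower U (al - 1))) with ((al * (1 - mu) * d2) * r0 * (/2) * ((12/5) * S * (U * Rpower U (al - 1)))) by field.
        apply Rmult_le_compat_l. assert (0 < al * (1 - mu) * d2 * r0 * / 2) by (apply Rmult_lt_0_compat; [nra|lra]). lra.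
        lra. }
      assert (Hq6 : d2 * (1 - mu) * al * Rpower S al / 2 * (r0 - u) <= a2 * (psi v - Rpower U al) * (r0 - u)) by lra.
      apply Rmult_le_reg_r with (r0 - u); lra.
  -
    assert (Hneg' : a2 < 0) by (destruct (Req_dec a2 0); [contradiction|lra]).
    assert (Habs : Rabs a2 = - a2) by (apply Rabs_left; lra). rewrite Habs in *.
    assert (Hvu_neg : v - u <= - ((1 - mu) * (- a2) * d2 * (71/36))).
    { rewrite Hvu. nra. }
    assert (Hvu_lt : v < u) by nra.
    assert (HpsiV : psi v = Rpower V al) by (apply (psi_f r0 al psi Hpsi); lra).
    rewrite HpsiV, HpsiU.
    assert (HVU : V < U) by (unfold U, V; unfold Rdiv; apply Rmult_lt_compat_r; [apply Rinv_0_lt_compat|]; lra).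
    destruct (rp_concave V U al ltac:(lra) Hal) as [Hc _].
    assert (Hs2 : 0 < - a2 - d2) by nra.
    assert (Hs3 : (71/72) * (- a2) <= - a2 - d2) by nra.
    assert (HUd : (1 - mu) * (- a2) * d2 * (71/36) / r0 <= U - V).
    { replace (U - V) with ((u - v) / r0) by (unfold U, V; field; lra).
      unfold Rdiv. apply Rmult_le_compat_r; [left; apply Rinv_0_lt_compat|]; lra. }
    assert (HU1' : 0 < al * Rpower U (al - 1)) by (apply Rmult_lt_0_compat; lra).
    assert (Hst1 : (- a2 - d2) * (al * Rpower U (al - 1) * (U - V)) <= (- a2 - d2) * (Rpower U al - Rpower V al)).
    { apply Rmult_le_compat_l; lra. }
    assert (Hst2 : (71/72) * (- a2) * (al * Rpower U (al - 1) * ((1 - mu) * (- a2) * d2 * (71/36) / r0)) <= (- a2 - d2) * (al * Rpower U (al - 1) * (U - V))).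
    { apply Rmult_le_compat; try lra.
      - assert (0 < (1 - mu) * (- a2) * d2 * (71/36) / r0).
        { apply Rdiv_lt_0_compat; [|lra]. apply Rmult_lt_0_compat; [|lra]. apply Rmult_lt_0_compat; [|lra]. nra. }
        nra.
      - apply Rmult_le_compat_l; lra. }
    assert (Ha2S : (- a2) * (- a2) = S * r0) by (unfold S; field; lra).
    assert (Hst3 : (71/72) * (- a2) * (al * Rpower U (al - 1) * ((1 - mu) * (- a2) * d2 * (71/36) / r0)) = (al * (1 - mu) * d2) * (71 * 71 / (72 * 36)) * S * Rpower U (al - 1)).
    { replace ((71/72) * (- a2) * (al * Rpower U (al - 1) * ((1 - mu) * (- a2) * d2 * (71/36) / r0))) with (((- a2) * (- a2)) * (71/72) * (al * Rpower U (al - 1) * ((1 - mu) * d2 * (71/36) / r0))) by (field; lra).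
      rewrite Ha2S. field. lra. }
    assert (Hfin : d2 * (1 - mu) * al * Rpower S al / 2 <= (al * (1 - mu) * d2) * (71 * 71 / (72 * 36)) * S * Rpower U (al - 1)).
    { assert (HS2 : 0 <= S * Rpower U (al - 1)) by nra.
      replace (d2 * (1 - mu) * al * Rpower S al / 2) with ((al * (1 - mu) * d2) * (Rpower S al / 2)) by field.
      replace ((al * (1 - mu) * d2) * (71 * 71 / (72 * 36)) * S * Rpower U (al - 1)) with ((al * (1 - mu) * d2) * ((71 * 71 / (72 * 36)) * (S * Rpower U (al - 1)))) by ring.
      apply Rmult_le_compat_l; lra. }
    replace (a2 + d2) with (- (- a2 - d2)) by ring.
    replace (- (- a2 - d2) * (Rpower V al - Rpower U al)) with ((- a2 - d2) * (Rpower U al - Rpower V al)) by ring.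
    lra.
Qed.
Lemma K2 a1 a2 d1 d2 mu : 0 < mu < 1 -> a1 <> 0 -> a2 ^ 2 <= a1 ^ 2 ->
  a1 ^ 2 + a2 ^ 2 <= r0 / 2 -> Rabs d1 <= mu * d2 -> 0 < d2 ->
  d2 <= (1 - mu) / 72 * Rabs a1 -> (a1 + d1) ^ 2 + (a2 + d2) ^ 2 <= 1 ->
  0 <= (a2 + d2) * (psi ((a1 + d1) ^ 2 + (a2 + d2) ^ 2) - psi (a1 ^ 2 + a2 ^ 2))
       + 2 * d2 * psi (a1 ^ 2 + a2 ^ 2).
Proof.
  intros Hmu Ha1 H12 Hu Hd1 Hd2 Hsmall Hv1.
  set (u := a1 ^ 2 + a2 ^ 2) in *.
  set (v := (a1 + d1) ^ 2 + (a2 + d2) ^ 2) in *.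
  set (U := u / r0). set (V := v / r0).
  assert (HA1 : 0 < Rabs a1) by (apply Rabs_pos_lt; auto).
  assert (Ha1sq : Rabs a1 ^ 2 = a1 ^ 2) by apply pow2_abs.
  assert (Ha2 : Rabs a2 <= Rabs a1).
  { apply Rsqr_incr_0_var. unfold Rsqr. rewrite <- !Rabs_mult. rewrite !Rabs_right. simpl in H12; lra.
    apply Rle_ge; nra. apply Rle_ge; nra. apply Rabs_pos. }
  assert (Hprod : Rabs (a1 * d1) <= mu * Rabs a1 * d2).
  { rewrite Rabs_mult. assert (0 <= Rabs d1) by apply Rabs_pos. assert (0 <= Rabs a1) by apply Rabs_pos. nra. }
  assert (Hp1 : - (mu * Rabs a1 * d2) <= a1 * d1 <= mu * Rabs a1 * d2).
  { split; [apply Ropp_le_cancel; rewrite Ropp_involutive|]; (eapply Rle_trans; [|apply Hprod]);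
      [rewrite <- Rabs_Ropp; apply RRle_abs| apply RRle_abs]. }
  assert (Hp2 : - (Rabs a1 * d2) <= a2 * d2 <= Rabs a1 * d2).
  { assert (Rabs (a2 * d2) <= Rabs a1 * d2) by (rewrite Rabs_mult, (Rabs_right d2) by lra; apply Rmult_le_compat_r; lra).
    split; [apply Ropp_le_cancel; rewrite Ropp_involutive|]; (eapply Rle_trans; [|apply H]);
      [rewrite <- Rabs_Ropp; apply RRle_abs| apply RRle_abs]. }
  assert (Hd1sq : d1 ^ 2 <= d2 ^ 2).
  { rewrite <- (pow2_abs d1). assert (0 <= Rabs d1) by apply Rabs_pos. apply pow_incr. nra. }
  assert (Hupos : 0 < u) by (unfold u; assert (0 < a1 ^ 2) by (apply pow2_gt_0; auto); nra).
  assert (Hu2 : a1 ^ 2 <= u) by (unfold u; nra).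
  assert (Hvu : v - u = 2 * (a1 * d1) + d1 ^ 2 + 2 * (a2 * d2) + d2 ^ 2) by (unfold v, u; ring).
  assert (Hk : d2 * Rabs a1 <= (1 - mu) / 72 * a1 ^ 2).
  { rewrite <- Ha1sq. replace ((1 - mu) / 72 * Rabs a1 ^ 2) with ((1 - mu) / 72 * Rabs a1 * Rabs a1) by ring.
    apply Rmult_le_compat_r; lra. }
  assert (Hk2 : d2 ^ 2 <= (1 - mu) / 72 * d2 * Rabs a1).
  { replace (d2 ^ 2) with (d2 * d2) by ring.
    replace ((1 - mu) / 72 * d2 * Rabs a1) with (d2 * ((1 - mu) / 72 * Rabs a1)) by ring.
    apply Rmult_le_compat_l; lra. }
  assert (Hb1 : d2 * Rabs a1 <= 1/72 * u) by nra.
  assert (Hb2 : d2 ^ 2 <= 1/72 * u) by nra.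
  assert (Hvu_up : v - u <= 6/100 * u) by (rewrite Hvu; nra).
  assert (Hvu_lo : - (6/100 * u) <= v - u).
  { rewrite Hvu. assert (0 <= d1 ^ 2) by apply pow2_ge_0. nra. }
  assert (Hvr0 : v < r0) by lra.
  assert (Hvpos : 0 < v) by lra.
  assert (HUpos : 0 < U) by (unfold U; apply Rdiv_lt_0_compat; lra).
  assert (HVpos : 0 < V) by (unfold V; apply Rdiv_lt_0_compat; lra).
  assert (HpsiU : psi u = Rpower U al) by (apply (psi_f r0 al psi Hpsi); lra).
  assert (HpU : 0 <= psi u <= 1) by (apply (psi_range r0 al psi Hpsi); lra).
  assert (HpV : 0 <= psi v <= 1) by (apply (psi_range r0 al psi Hpsi); lra).
  assert (HUpow : Rpower U al = U * Rpower U (al - 1)) by (rewrite <- (rp_shift U al); lra || ring).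
  assert (HU1 : 0 < Rpower U (al - 1)) by apply rp_pos.
  replace ((a2 + d2) * (psi v - psi u) + 2 * d2 * psi u) with (a2 * (psi v - psi u) + d2 * psi v + d2 * psi u) by ring.
  assert (0 <= d2 * psi v) by nra.
  destruct (Rle_dec 0 (a2 * (psi v - psi u))) as [Hok|Hbad]; [nra|].
  destruct (Rlt_dec 0 a2) as [Hpos|Hneg].
  - assert (Hlt : psi v < psi u) by nra.
    assert (Hvu_lt : v < u).
    { destruct (Rlt_dec v u) as [|Hn]; auto. exfalso.
      assert (psi u <= psi v) by (apply (psi_mono r0 al psi Hr0 Hpsi); lra). lra. }
    assert (Huv2 : u - v <= 2 * mu * Rabs a1 * d2).
    { assert (0 <= d1 ^ 2) by apply pow2_ge_0. assert (0 <= d2 ^ 2) by apply pow2_ge_0. nra. }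
    set (c := 1 - (1 - mu) / 36).
    assert (Hc : 0 < c <= 1) by (unfold c; lra).
    assert (Hmuc : mu <= c) by (unfold c; lra).
    assert (HvC : c * u <= v) by (unfold c; nra).
    assert (HVC : c * U <= V).
    { unfold U, V. replace (c * (u / r0)) with ((c * u) / r0) by (field; lra).
      unfold Rdiv. apply Rmult_le_compat_r; [left; apply Rinv_0_lt_compat|]; lra. }
    assert (HVU : V < U) by (unfold U, V; unfold Rdiv; apply Rmult_lt_compat_r; [apply Rinv_0_lt_compat|]; lra).
    assert (HpsiV : psi v = Rpower V al) by (apply (psi_f r0 al psi Hpsi); lra).
    destruct (rp_concave V U al ltac:(lra) Hal) as [_ Hc2].
    assert (HVp : Rpower V (al - 1) <= Rpower U (al - 1) / c).
    { eapply Rle_trans. apply (rp_dec_neg (c * U) V); [split; [apply Rmult_lt_0_compat; lra|exact HVC]|lra]. apply rp_scale_lo; lra. }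
    assert (HVp0 : 0 < Rpower V (al - 1)) by apply rp_pos.
    assert (HUV : U - V = (u - v) / r0) by (unfold U, V; field; lra).
    assert (Hm1 : a2 * (Rpower U al - Rpower V al) <= a2 * (al * Rpower V (al - 1) * (U - V))) by (apply Rmult_le_compat_l; lra).
    assert (H2a : 2 * a2 * Rabs a1 <= u).
    { assert (Rabs a2 = a2) by (apply Rabs_right; lra).
      assert ((Rabs a1 - a2) ^ 2 >= 0) by (apply Rle_ge, pow2_ge_0).
      unfold u. rewrite <- Ha1sq. nra. }
    assert (Hm2 : a2 * (U - V) <= mu * U * d2).
    { rewrite HUV. unfold U. unfold Rdiv.
      assert (a2 * (u - v) <= mu * u * d2).
      { assert (a2 * (u - v) <= a2 * (2 * mu * Rabs a1 * d2)) by (apply Rmult_le_compat_l; lra).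
        assert (a2 * (2 * mu * Rabs a1 * d2) <= mu * u * d2).
        { replace (a2 * (2 * mu * Rabs a1 * d2)) with ((2 * a2 * Rabs a1) * (mu * d2)) by ring.
          replace (mu * u * d2) with (u * (mu * d2)) by ring.
          apply Rmult_le_compat_r; [apply Rmult_le_pos; lra|lra]. }
        lra. }
      assert (0 < / r0) by (apply Rinv_0_lt_compat; lra).
      replace (a2 * ((u - v) * / r0)) with ((a2 * (u - v)) * / r0) by ring.
      replace (mu * (u * / r0) * d2) with ((mu * u * d2) * / r0) by ring.
      apply Rmult_le_compat_r; lra. }
    assert (Hm3 : a2 * (al * Rpower V (al - 1) * (U - V)) <= al * Rpower V (al - 1) * (mu * U * d2)).
    { replace (a2 * (al * Rpower V (al - 1) * (U - V))) with (al * Rpower V (al - 1) * (a2 * (U - V))) by ring.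
      apply Rmult_le_compat_l; [apply Rmult_le_pos; lra|exact Hm2]. }
    assert (Hm4 : al * Rpower V (al - 1) * (mu * U * d2) <= al * (Rpower U (al - 1) / c) * (mu * U * d2)).
    { apply Rmult_le_compat_r; [apply Rmult_le_pos; [apply Rmult_le_pos|]; lra|]. apply Rmult_le_compat_l; lra. }
    assert (Hm5 : al * (Rpower U (al - 1) / c) * (mu * U * d2) <= d2 * Rpower U al).
    { rewrite HUpow.
      replace (al * (Rpower U (al - 1) / c) * (mu * U * d2)) with ((al * mu / c) * (d2 * (U * Rpower U (al - 1)))) by (field; lra).
      assert (al * mu / c <= 1).
      { apply Rmult_le_reg_r with c; [lra|]. replace (al * mu / c * c) with (al * mu) by (field; lra).
        assert (al * mu <= mu) by (rewrite <- (Rmult_1_l mu) at 2; apply Rmult_le_compat_r; lra). lra. }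
      assert (0 <= d2 * (U * Rpower U (al - 1))) by (apply Rmult_le_pos; [lra|apply Rmult_le_pos; lra]).
      apply Rle_trans with (1 * (d2 * (U * Rpower U (al - 1)))); [apply Rmult_le_compat_r; lra|lra]. }
    rewrite HpsiV, HpsiU in *. lra.
  - assert (Hneg' : a2 < 0) by (destruct (Req_dec a2 0) as [He|]; [rewrite He in Hbad; lra|lra]).
    assert (Hlt : psi u < psi v) by nra.
    assert (Huv : u < v).
    { destruct (Rlt_dec u v) as [|Hn]; auto. exfalso.
      assert (psi v <= psi u) by (apply (psi_mono r0 al psi Hr0 Hpsi); lra). lra. }
    assert (Hvu2 : v - u <= 2 * mu * Rabs a1 * d2 + 2 * d2 ^ 2) by nra.
    assert (Hup := psi_upper r0 al psi Hr0 Hpsi u v ltac:(lra) Hvr0).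
    replace (u / 2 / r0) with (U / 2) in Hup by (unfold U; field; lra).
    assert (Hh := rp_half U al HUpos Hal).
    assert (Hup2 : psi v - psi u <= Rpower U (al - 1) / r0 * (v - u)).
    { eapply Rle_trans; [exact Hup|]. apply Rmult_le_compat_r; [lra|].
      assert (0 < / r0) by (apply Rinv_0_lt_compat; lra).
      replace (al / r0 * Rpower (U / 2) (al - 1)) with ((al * Rpower (U / 2) (al - 1)) * / r0) by (unfold Rdiv; ring).
      unfold Rdiv at 2. apply Rmult_le_compat_r; lra. }
    assert (Habs2 : Rabs a2 = - a2) by (apply Rabs_left; lra).
    assert (H2a : 2 * (- a2) * Rabs a1 <= u).
    { assert ((Rabs a1 + a2) ^ 2 >= 0) by (apply Rle_ge, pow2_ge_0).
      unfold u. rewrite <- Ha1sq. nra. }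
    assert (Hn1 : (- a2) * (v - u) <= (mu + (1 - mu) / 36) * u * d2).
    { assert ((- a2) * (v - u) <= (- a2) * (2 * mu * Rabs a1 * d2 + 2 * d2 ^ 2)) by (apply Rmult_le_compat_l; lra).
      assert ((- a2) * (2 * mu * Rabs a1 * d2) <= mu * u * d2).
      { replace ((- a2) * (2 * mu * Rabs a1 * d2)) with ((2 * (- a2) * Rabs a1) * (mu * d2)) by ring.
        replace (mu * u * d2) with (u * (mu * d2)) by ring. apply Rmult_le_compat_r; [apply Rmult_le_pos; lra|lra]. }
      assert ((- a2) * (2 * d2 ^ 2) <= (1 - mu) / 36 * u * d2).
      { assert (- a2 <= Rabs a1) by lra.
        assert ((- a2) * (2 * d2 ^ 2) <= Rabs a1 * (2 * d2 ^ 2)) by (apply Rmult_le_compat_r; nra).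
        assert (Rabs a1 * d2 ^ 2 <= (1 - mu) / 72 * a1 ^ 2 * d2).
        { replace (d2 ^ 2) with (d2 * d2) by ring.
          replace (Rabs a1 * (d2 * d2)) with ((d2 * Rabs a1) * d2) by ring.
          apply Rmult_le_compat_r; lra. }
        assert ((1 - mu) / 72 * a1 ^ 2 * d2 <= (1 - mu) / 72 * u * d2).
        { apply Rmult_le_compat_r; [lra|]. apply Rmult_le_compat_l; lra. }
        lra. }
      lra. }
    assert (Hn2 : (- a2) * (psi v - psi u) <= (- a2) * (Rpower U (al - 1) / r0 * (v - u))) by (apply Rmult_le_compat_l; lra).
    assert (Hn3 : (- a2) * (Rpower U (al - 1) / r0 * (v - u)) <= Rpower U (al - 1) / r0 * ((mu + (1 - mu) / 36) * u * d2)).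
    { replace ((- a2) * (Rpower U (al - 1) / r0 * (v - u))) with (Rpower U (al - 1) / r0 * ((- a2) * (v - u))) by ring.
      apply Rmult_le_compat_l; [|lra]. left; apply Rdiv_lt_0_compat; lra. }
    assert (Hn4 : Rpower U (al - 1) / r0 * ((mu + (1 - mu) / 36) * u * d2) <= d2 * psi u).
    { rewrite HpsiU, HUpow.
      replace (Rpower U (al - 1) / r0 * ((mu + (1 - mu) / 36) * u * d2)) with ((mu + (1 - mu) / 36) * (d2 * (U * Rpower U (al - 1)))) by (unfold U; field; lra).
      assert (0 <= d2 * (U * Rpower U (al - 1))) by (apply Rmult_le_pos; [lra|apply Rmult_le_pos; lra]).
      apply Rle_trans with (1 * (d2 * (U * Rpower U (al - 1)))); [apply Rmult_le_compat_r; lra|lra]. }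
    lra.
Qed.
End K.


Lemma sign_split (g dg : R -> R) a b : a <= b ->
  (forall t, a <= t <= b -> is_derive g t (dg t)) ->
  (forall t, a <= t <= b -> g t <> 0) ->
  exists e, (e = 1 \/ e = -1) /\ forall t, a <= t <= b -> Rabs (g t) = e * g t /\ 0 < e * g t.
Proof.
  intros Hab Hd Hnz. assert (Hs := sign_const g dg a b Hab Hd Hnz).
  destruct (Rlt_dec 0 (g a)) as [Hp|Hn].
  - exists 1. split; [left; auto|]. intros t Ht. specialize (Hs t Ht).
    assert (0 < g t) by nra. rewrite Rabs_right by lra. split; lra.
  - assert (g a <> 0) by (apply Hnz; lra). assert (g a < 0) by lra.
    exists (-1). split; [right; auto|]. intros t Ht. specialize (Hs t Ht).
    assert (g t < 0) by nra. rewrite Rabs_left by lra. split; lra.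
Qed.

Theorem lemma5p3
  (lam alpha r0 mu T t0 t1 : R) (psi s1 s2 st1 st2 : R -> R)
  (Hlam : 1 < lam) (Halpha : 0 < alpha < 1) (Hr0 : 0 < r0 < 1)
  (Hpsi : admissible_psi r0 alpha psi)
  (Hmu : 0 < mu < 1)
  (HT : 0 < T) (Ht0 : t0 < 0) (Ht1 : T < t1)
  (* s is a solution on the open interval (t0,t1), staying in D_1 *)
  (Hs_sol : forall t, t0 < t < t1 -> solves_at psi lam s1 s2 t)
  (Hs_D1 : forall t, t0 < t < t1 -> inD 1 (s1 t) (s2 t))
  (* [0,T] is the maximal time interval on which s(t) lies in D_{r0/2} *)
  (Hs_in : forall t, 0 <= t <= T -> inD (r0 / 2) (s1 t) (s2 t))
  (Hs_max0 : forall eps, 0 < eps -> exists t, t0 < t /\ - eps < t < 0 /\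
                ~ inD (r0 / 2) (s1 t) (s2 t))
  (Hs_maxT : forall eps, 0 < eps -> exists t, t < t1 /\ T < t < T + eps /\
                ~ inD (r0 / 2) (s1 t) (s2 t))
  (Hs_first : forall t, 0 <= t <= T / 2 -> Rabs (s1 t) <= Rabs (s2 t))
  (Hs_second : forall t, T / 2 <= t <= T -> Rabs (s2 t) <= Rabs (s1 t))
  (Hs_nz : forall t, 0 <= t <= T -> s1 t <> 0 /\ s2 t <> 0)
  (* stilde is another solution of the same system (on [0,T], in D_1) *)
  (Hst_sol : forall t, 0 <= t <= T -> solves_at psi lam st1 st2 t)
  (Hst_D1 : forall t, 0 <= t <= T -> inD 1 (st1 t) (st2 t))
  (* hypothesis (1) *)
  (H1 : forall t, 0 <= t <= T ->
          0 < st2 t - s2 t /\ Rabs (st1 t - s1 t) <= mu * (st2 t - s2 t))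
  (* hypothesis (2) *)
  (H2 : Rabs ((st2 0 - s2 0) / s2 0) < (1 - mu) / 72) :
  let C1 := 2 * alpha * ln lam / Rpower r0 alpha in
  let beta := (1 - mu) / Rpower 2 (alpha + 2) in
  let T1 := T / 2 in
  let ds1 := fun t => st1 t - s1 t in
  let ds2 := fun t => st2 t - s2 t in
  (forall t, 0 <= t <= T1 ->
     ds2 t <= ds2 0 / s2 0 * s2 t *
              Rpower (1 + Rpower 2 alpha * C1 * Rpower (Rabs (s2 0)) (2 * alpha) * t)
                     (- beta)) /\
  (forall t, T1 <= t <= T ->
     0 < 1 - Rpower 2 alpha * C1 * Rpower (Rabs (s1 T1)) (2 * alpha) * (t - T1) ->
     ds2 t <= ds2 T1 / s1 T1 * s1 t *
              Rpower (1 - Rpower 2 alpha * C1 * Rpower (Rabs (s1 T1)) (2 * alpha) * (t - T1))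
                     (- beta)) /\
  eucl_norm (ds1 T) (ds2 T) <=
    sqrt (1 + mu ^ 2) * Rabs (s1 T / s2 0) * eucl_norm (ds1 0) (ds2 0).
Proof.
  intros C1 beta T1 ds1 ds2.
  set (L := ln lam).
  assert (HL : 0 < L) by (unfold L; rewrite <- ln_1; apply ln_increasing; lra).
  set (F := fun t => psi (s1 t ^ 2 + s2 t ^ 2)).
  set (Ft := fun t => psi (st1 t ^ 2 + st2 t ^ 2)).
  assert (Hd1 : forall t, 0 <= t <= T -> is_derive s1 t (s1 t * F t * L)).
  { intros t Ht. apply (Hs_sol t). lra. }
  assert (Hd2 : forall t, 0 <= t <= T -> is_derive s2 t (- (s2 t * F t * L))).
  { intros t Ht. apply (Hs_sol t). lra. }
  assert (Hdt1 : forall t, 0 <= t <= T -> is_derive st1 t (st1 t * Ft t * L)).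
  { intros t Ht. apply (Hst_sol t). lra. }
  assert (Hdt2 : forall t, 0 <= t <= T -> is_derive st2 t (- (st2 t * Ft t * L))).
  { intros t Ht. apply (Hst_sol t). lra. }
  destruct (sign_split s2 _ 0 T ltac:(lra) Hd2) as [e2 [He2 Habs2]].
  { intros t Ht; apply Hs_nz; auto. }
  destruct (sign_split s1 _ 0 T ltac:(lra) Hd1) as [e1 [He1 Habs1]].
  { intros t Ht; apply Hs_nz; auto. }
  set (M := (1 - mu) / 72).
  set (p := fun t => ds2 t / (e2 * s2 t)).
  set (pd := fun t => - (L * st2 t * (Ft t - F t)) / (e2 * s2 t)).
  assert (Hpd : forall t, 0 <= t <= T -> is_derive p t (pd t)).
  { intros t Ht. destruct (Habs2 t Ht) as [_ Hpos].
    unfold p, pd, ds2. auto_derive.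
    - repeat split; try (eexists; eauto). lra.
    - replace (Derive (fun x => st2 x) t) with (- (st2 t * Ft t * L)) by (symmetry; apply is_derive_unique; apply Hdt2; auto).
      replace (Derive (fun x => s2 x) t) with (- (s2 t * F t * L)) by (symmetry; apply is_derive_unique; apply Hd2; auto).
      match goal with |- ?a = ?b => change (@eq R a b) end.
      destruct He2 as [-> | ->]; field; lra. }
  assert (HC1 : 0 < C1).
  { unfold C1. apply Rdiv_lt_0_compat; [|apply rp_pos]. fold L. nra. }
  assert (Hbeta : 0 < beta) by (unfold beta; apply Rdiv_lt_0_compat; [lra|apply rp_pos]).
  set (K := Rpower 2 alpha * C1).
  assert (HK : 0 < K) by (unfold K; apply Rmult_lt_0_compat; [apply rp_pos|auto]).
  set (y := fun t => Rpower (Rabs (s2 t)) (2 * alpha)).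
  set (c0 := Rpower 2 alpha * C1 * Rpower (Rabs (s2 0)) (2 * alpha)).
  assert (Hc0 : c0 = K * y 0) by reflexivity.
  assert (Hy0 : 0 < y 0) by apply rp_pos.
  assert (Hc0p : 0 < c0) by (rewrite Hc0; apply Rmult_lt_0_compat; auto).
  set (E := fun t => exp (beta * ln (1 + c0 * t))).
  set (Phi := fun t => p t * E t).
  set (Phid := fun t => pd t * E t + p t * (beta * (c0 / (1 + c0 * t)) * E t)).
  assert (HPhid : forall t, 0 <= t <= T -> is_derive Phi t (Phid t)).
  { intros t Ht. unfold Phi, Phid, E.
    assert (0 < 1 + c0 * t) by nra.
    apply (is_derive_mult p (fun t => exp (beta * ln (1 + c0 * t)))).
    apply Hpd; auto.
    auto_derive. lra. match goal with |- ?a = ?b => change (@eq R a b) end. field. lra.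
    intros; apply Rmult_comm. }
  assert (HT1 : 0 < T1 < T) by (unfold T1; lra).
  assert (Hsq1 : forall t, 0 <= t <= T1 -> s1 t ^ 2 <= s2 t ^ 2).
  { intros t Ht. rewrite <- (pow2_abs (s1 t)), <- (pow2_abs (s2 t)). apply pow_incr.
    split; [apply Rabs_pos|]. apply Hs_first; unfold T1 in Ht; lra. }
  assert (Hsq2 : forall t, T1 <= t <= T -> s2 t ^ 2 <= s1 t ^ 2).
  { intros t Ht. rewrite <- (pow2_abs (s1 t)), <- (pow2_abs (s2 t)). apply pow_incr.
    split; [apply Rabs_pos|]. apply Hs_second; unfold T1 in Ht; lra. }
  assert (Hs2sq : forall t, 0 <= t <= T -> 0 < s2 t ^ 2).
  { intros t Ht. apply pow2_gt_0. apply Hs_nz; auto. }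
  assert (Hs1sq : forall t, 0 <= t <= T -> 0 < s1 t ^ 2).
  { intros t Ht. apply pow2_gt_0. apply Hs_nz; auto. }
  assert (Hin : forall t, 0 <= t <= T -> s1 t ^ 2 + s2 t ^ 2 <= r0 / 2).
  { intros t Ht. apply Hs_in; auto. }
  assert (HFf : forall t, 0 <= t <= T -> F t = Rpower ((s1 t ^ 2 + s2 t ^ 2) / r0) alpha).
  { intros t Ht. unfold F. apply (psi_f r0 alpha psi Hpsi).
    split; [|apply Hin; auto]. assert (0 < s2 t ^ 2) by auto. assert (0 <= s1 t ^ 2) by apply pow2_ge_0. lra. }
  assert (Hyf : forall t, 0 <= t <= T -> y t = Rpower (s2 t ^ 2 / r0) alpha * Rpower r0 alpha).
  { intros t Ht. unfold y. apply rp_abs2; [apply Hs_nz; auto|lra]. }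
  set (z := fun t => exp (- (2 * alpha) * ln (e2 * s2 t))).
  set (zd := fun t => 2 * alpha * F t * L * z t).
  assert (Hzd : forall t, 0 <= t <= T -> is_derive z t (zd t)).
  { intros t Ht. destruct (Habs2 t Ht) as [_ Hpos].
    unfold z, zd. auto_derive.
    - repeat split; try (eexists; eauto). lra.
    - replace (Derive (fun x => s2 x) t) with (- (s2 t * F t * L)) by (symmetry; apply is_derive_unique; apply Hd2; auto).
      match goal with |- ?a = ?b => change (@eq R a b) end.
      unfold z. destruct He2 as [-> | ->]; field; lra. }
  assert (Hzy : forall t, 0 <= t <= T -> z t * y t = 1).
  { intros t Ht. destruct (Habs2 t Ht) as [Ha _]. unfold z, y, Rpower. rewrite Ha, <- exp_plus.
    replace (- (2 * alpha) * ln (e2 * s2 t) + 2 * alpha * ln (e2 * s2 t)) with 0 by ring. apply exp_0. }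
  assert (Hzdb : forall t, 0 <= t <= T1 -> zd t <= K).
  { intros t Ht. assert (Ht' : 0 <= t <= T) by lra.
    assert (Hz0 : 0 < z t) by (unfold z; apply exp_pos).
    assert (HS : 0 < s2 t ^ 2 / r0) by (apply Rdiv_lt_0_compat; [auto|lra]).
    assert (HFb : F t <= Rpower 2 alpha * Rpower (s2 t ^ 2 / r0) alpha).
    { rewrite HFf by auto. rewrite <- rp_mul by lra. apply rp_inc; [|lra]. split.
      apply Rdiv_lt_0_compat; [|lra]. assert (0 < s2 t ^ 2) by auto. assert (0 <= s1 t ^ 2) by apply pow2_ge_0. lra.
      unfold Rdiv. rewrite <- Rmult_assoc. apply Rmult_le_compat_r; [left; apply Rinv_0_lt_compat; lra|].
      assert (s1 t ^ 2 <= s2 t ^ 2) by auto. lra. }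
    assert (Hzy' := Hzy t Ht'). rewrite Hyf in Hzy' by auto.
    unfold zd, K, C1. fold L.
    assert (Hr0a : 0 < Rpower r0 alpha) by apply rp_pos.
    assert (Hz1 : z t * Rpower (s2 t ^ 2 / r0) alpha = / Rpower r0 alpha).
    { apply Rmult_eq_reg_r with (Rpower r0 alpha); [|lra]. rewrite Rinv_l by lra. rewrite <- Hzy'. ring. }
    assert (2 * alpha * F t * L * z t <= 2 * alpha * (Rpower 2 alpha * Rpower (s2 t ^ 2 / r0) alpha) * L * z t).
    { apply Rmult_le_compat_r; [lra|]. apply Rmult_le_compat_r; [lra|]. apply Rmult_le_compat_l; lra. }
    replace (Rpower 2 alpha * (2 * alpha * L / Rpower r0 alpha)) with (2 * alpha * Rpower 2 alpha * L * (z t * Rpower (s2 t ^ 2 / r0) alpha)) by (rewrite Hz1; field; lra).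
    lra. }
  assert (HzB : forall t, 0 <= t <= T1 -> z t <= z 0 + K * t).
  { intros t Ht. destruct (Req_dec t 0) as [->|Hne]; [lra|].
    destruct (mvt_open z zd 0 t ltac:(lra)) as [c [Hc Hc']].
    { intros x Hx; apply Hzd; lra. }
    assert (zd c <= K) by (apply Hzdb; lra).
    assert (zd c * (t - 0) <= K * (t - 0)) by (apply Rmult_le_compat_r; lra). lra. }
  assert (Hrate : forall t, 0 <= t <= T1 -> c0 / (1 + c0 * t) <= K * y t).
  { intros t Ht. assert (Ht' : 0 <= t <= T) by lra.
    assert (Hq1 := HzB t Ht). assert (Hq2 := Hzy t Ht'). assert (Hq3 := Hzy 0 ltac:(lra)).
    assert (Hyt : 0 < y t) by apply rp_pos.
    assert (Hzt : 0 < z t) by (unfold z; apply exp_pos).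
    assert (Hz0 : z 0 = / y 0) by (apply Rmult_eq_reg_r with (y 0); [rewrite Rinv_l; lra|lra]).
    assert (Hden : y 0 * z t <= 1 + c0 * t).
    { rewrite Hc0. assert (y 0 * z t <= y 0 * (z 0 + K * t)) by (apply Rmult_le_compat_l; lra).
      rewrite Hz0 in H. rewrite Rmult_plus_distr_l, Rinv_r in H by lra. lra. }
    assert (0 < 1 + c0 * t) by nra.
    apply Rle_trans with (c0 / (y 0 * z t)).
    { unfold Rdiv. apply Rmult_le_compat_l; [lra|]. apply Rinv_le_contravar; [nra|lra]. }
    rewrite Hc0. replace (y t) with (/ z t) by (apply Rmult_eq_reg_l with (z t); [rewrite Rinv_r; lra|lra]).
    right. field. lra. }
  assert (HR24 : Rpower 2 (alpha + 2) = Rpower 2 alpha * 4).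
  { rewrite Rpower_plus. f_equal. replace 2 with (INR 2) at 2 by (simpl; ring).
    rewrite Rpower_pow by lra. ring. }
  assert (Hbk : forall t, 0 <= t <= T -> beta * K * y t = (1 - mu) * alpha * L * Rpower (s2 t ^ 2 / r0) alpha / 2).
  { intros t Ht. rewrite Hyf by auto. unfold beta, K, C1. fold L. rewrite HR24.
    assert (0 < Rpower 2 alpha) by apply rp_pos. assert (0 < Rpower r0 alpha) by apply rp_pos.
    field. lra. }
  assert (HE1 : forall t, 0 <= t -> 1 <= E t).
  { intros t Ht. unfold E. assert (0 <= ln (1 + c0 * t)).
    { destruct (Req_dec t 0) as [->|]. rewrite Rmult_0_r, Rplus_0_r, ln_1; lra.
      left. rewrite <- ln_1. apply ln_increasing; nra. }
    assert (Hx := exp_ineq1_le (beta * ln (1 + c0 * t))). nra. }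
  assert (Hds : forall t, 0 <= t <= T -> 0 < ds2 t /\ Rabs (ds1 t) <= mu * ds2 t).
  { intros t Ht. apply H1; auto. }
  assert (Hpp : forall t, 0 <= t <= T -> 0 < p t).
  { intros t Ht. unfold p. destruct (Hds t Ht). destruct (Habs2 t Ht). apply Rdiv_lt_0_compat; lra. }
  assert (HpPhi : forall t, 0 <= t <= T -> p t <= Phi t).
  { intros t Ht. unfold Phi. assert (1 <= E t) by (apply HE1; lra). assert (0 < p t) by auto. nra. }
  assert (HPhineg : forall t, 0 <= t <= T1 -> Phi t < M -> Phid t <= 0).
  { intros t Ht HPM. assert (Ht' : 0 <= t <= T) by lra.
    destruct (Habs2 t Ht') as [Ha2 Hpos2]. destruct (Hds t Ht') as [Hd2p Hd1m].
    assert (Hpt : p t < M) by (assert (Hx := HpPhi t Ht'); lra).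
    assert (Hsmall : ds2 t <= (1 - mu) / 72 * Rabs (s2 t)).
    { rewrite Ha2. unfold p in Hpt. fold M.
      apply Rmult_lt_compat_r with (r := e2 * s2 t) in Hpt; [|lra].
      unfold Rdiv in Hpt. rewrite Rmult_assoc, Rinv_l in Hpt by lra. lra. }
    assert (HK1 := K1 r0 alpha psi Hr0 Halpha Hpsi (s1 t) (s2 t) (ds1 t) (ds2 t) mu Hmu
                   ltac:(apply Hs_nz; auto) (Hsq1 t Ht) (Hin t Ht') Hd1m Hd2p Hsmall).
    replace (s1 t + ds1 t) with (st1 t) in HK1 by (unfold ds1; ring).
    replace (s2 t + ds2 t) with (st2 t) in HK1 by (unfold ds2; ring).
    fold (Ft t) (F t) in HK1.
    assert (HEt : 1 <= E t) by (apply HE1; lra).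
    assert (Hr := Hrate t Ht).
    assert (Hyt : 0 < y t) by apply rp_pos.
    assert (Hb := Hbk t Ht').
    assert (Hkey : pd t + p t * (beta * (c0 / (1 + c0 * t))) <= 0).
    { assert (p t * (beta * (c0 / (1 + c0 * t))) <= p t * (beta * (K * y t))).
      { apply Rmult_le_compat_l; [left; apply Hpp; auto|]. apply Rmult_le_compat_l; lra. }
      assert (Heq : p t * (beta * (K * y t)) = ds2 t * ((1 - mu) * alpha * L * Rpower (s2 t ^ 2 / r0) alpha / 2) / (e2 * s2 t)).
      { rewrite <- Hb. unfold p.
        assert (e2 <> 0) by (destruct He2; lra). assert (s2 t <> 0) by (apply Hs_nz; auto).
        field. auto. }
      assert (Hfin : pd t + ds2 t * ((1 - mu) * alpha * L * Rpower (s2 t ^ 2 / r0) alpha / 2) / (e2 * s2 t) <= 0).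
      { unfold pd. unfold Rdiv.
        replace (- (L * st2 t * (Ft t - F t)) * / (e2 * s2 t) + ds2 t * ((1 - mu) * alpha * L * Rpower (s2 t ^ 2 * / r0) alpha * / 2) * / (e2 * s2 t))
          with (L * (ds2 t * (1 - mu) * alpha * Rpower (s2 t ^ 2 * / r0) alpha * / 2 - st2 t * (Ft t - F t)) * / (e2 * s2 t)) by ring.
        apply Rmult_le_0_r; [|left; apply Rinv_0_lt_compat; lra].
        apply Rmult_le_0_l; [lra|]. unfold Rdiv in HK1. lra. }
      lra. }
    unfold Phid.
    replace (pd t * E t + p t * (beta * (c0 / (1 + c0 * t)) * E t)) with ((pd t + p t * (beta * (c0 / (1 + c0 * t)))) * E t) by ring.
    apply Rmult_le_0_r; lra. }
  assert (HE0 : E 0 = 1) by (unfold E; rewrite Rmult_0_r, Rplus_0_r, ln_1, Rmult_0_r; apply exp_0).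
  assert (HPhi0 : Phi 0 = p 0) by (unfold Phi; rewrite HE0; ring).
  assert (Hp0 : p 0 < M).
  { destruct (Habs2 0 ltac:(lra)) as [Ha _]. destruct (Hds 0 ltac:(lra)) as [Hdp _].
    unfold p. rewrite <- Ha. change (st2 0 - s2 0) with (ds2 0) in H2. rewrite Rabs_div in H2 by (apply Hs_nz; lra).
    rewrite (Rabs_right (ds2 0)) in H2 by lra. exact H2. }
  assert (Hboot1 : forall t, 0 <= t <= T1 -> Phi t <= Phi 0).
  { apply (boot Phi Phid 0 T1 M); [lra| |lra|].
    - intros t Ht; apply HPhid; lra.
    - exact HPhineg. }
  assert (HpT : forall t, 0 <= t <= T1 -> p t <= p 0).
  { intros t Ht. assert (Hx := HpPhi t ltac:(lra)). assert (Hy := Hboot1 t Ht). lra. }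
  assert (He2sq : e2 * e2 = 1) by (destruct He2 as [-> | ->]; ring).
  assert (He1sq : e1 * e1 = 1) by (destruct He1 as [-> | ->]; ring).
  split.
  {
    intros t Ht. assert (Ht' : 0 <= t <= T) by lra.
    rewrite Rpower_Ropp.
    change (Rpower (1 + K * Rpower (Rabs (s2 0)) (2 * alpha) * t) beta) with (E t).
    destruct (Habs2 t Ht') as [_ Hpos]. destruct (Habs2 0 ltac:(lra)) as [_ Hpos0].
    assert (HEt : 1 <= E t) by (apply HE1; lra).
    assert (Hb := Hboot1 t Ht). rewrite HPhi0 in Hb. unfold Phi in Hb.
    assert (Hpt : p t <= p 0 / E t).
    { apply Rmult_le_reg_r with (E t); [lra|]. replace (p 0 / E t * E t) with (p 0) by (field; lra). lra. }
    assert (He20 : e2 <> 0) by (destruct He2; lra). assert (Hs2t0 : s2 t <> 0) by (apply Hs_nz; lra).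
    assert (Hds2t : ds2 t = p t * (e2 * s2 t)) by (unfold p; field; auto).
    assert (Hr : ds2 0 / s2 0 * s2 t * / E t = p 0 / E t * (e2 * s2 t)).
    { unfold p. assert (e2 <> 0) by (destruct He2; lra). assert (s2 0 <> 0) by (apply Hs_nz; lra).
      assert (E t <> 0) by lra.
      field. repeat split; auto. }
    rewrite Hds2t, Hr. apply Rmult_le_compat_r; lra. }
  set (r := fun t => ds2 t / (e1 * s1 t)).
  set (rd := fun t => - (L * (st2 t * (Ft t - F t) + 2 * ds2 t * F t)) / (e1 * s1 t)).
  assert (Hrd : forall t, 0 <= t <= T -> is_derive r t (rd t)).
  { intros t Ht. destruct (Habs1 t Ht) as [_ Hpos].
    unfold r, rd, ds2. auto_derive.
    - repeat split; try (eexists; eauto). lra.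
    - replace (Derive (fun x => st2 x) t) with (- (st2 t * Ft t * L)) by (symmetry; apply is_derive_unique; apply Hdt2; auto).
      replace (Derive (fun x => s2 x) t) with (- (s2 t * F t * L)) by (symmetry; apply is_derive_unique; apply Hd2; auto).
      replace (Derive (fun x => s1 x) t) with (s1 t * F t * L) by (symmetry; apply is_derive_unique; apply Hd1; auto).
      match goal with |- ?a = ?b => change (@eq R a b) end.
      destruct He1 as [-> | ->]; field; lra. }
  assert (HT1r : r T1 = p T1).
  { unfold r, p. destruct (Habs1 T1 ltac:(lra)) as [Ha1 _]. destruct (Habs2 T1 ltac:(lra)) as [Ha2 _].
    rewrite <- Ha1, <- Ha2. f_equal.
    assert (Rabs (s1 (T / 2)) <= Rabs (s2 (T / 2))) by (apply Hs_first; lra).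
    assert (Rabs (s2 (T / 2)) <= Rabs (s1 (T / 2))) by (apply Hs_second; lra).
    unfold T1. lra. }
  assert (HrT1 : r T1 < M).
  { rewrite HT1r. assert (p T1 <= p 0) by (apply HpT; lra). lra. }
  assert (Hrneg : forall t, T1 <= t <= T -> r t < M -> rd t <= 0).
  { intros t Ht HrM. assert (Ht' : 0 <= t <= T) by lra.
    destruct (Habs1 t Ht') as [Ha1 Hpos1]. destruct (Hds t Ht') as [Hd2p Hd1m].
    assert (Hsmall : ds2 t <= (1 - mu) / 72 * Rabs (s1 t)).
    { rewrite Ha1. unfold r in HrM. fold M.
      apply Rmult_lt_compat_r with (r := e1 * s1 t) in HrM; [|lra].
      unfold Rdiv in HrM. rewrite Rmult_assoc, Rinv_l in HrM by lra. lra. }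
    assert (Hv1 : (s1 t + ds1 t) ^ 2 + (s2 t + ds2 t) ^ 2 <= 1).
    { replace (s1 t + ds1 t) with (st1 t) by (unfold ds1; ring).
      replace (s2 t + ds2 t) with (st2 t) by (unfold ds2; ring). apply Hst_D1; auto. }
    assert (HK2 := K2 r0 alpha psi Hr0 Halpha Hpsi (s1 t) (s2 t) (ds1 t) (ds2 t) mu Hmu
                   ltac:(apply Hs_nz; auto) (Hsq2 t Ht) (Hin t Ht') Hd1m Hd2p Hsmall Hv1).
    replace (s1 t + ds1 t) with (st1 t) in HK2 by (unfold ds1; ring).
    replace (s2 t + ds2 t) with (st2 t) in HK2 by (unfold ds2; ring).
    fold (Ft t) (F t) in HK2.
    unfold rd. unfold Rdiv. apply Rmult_le_0_r; [|left; apply Rinv_0_lt_compat; lra].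
    assert (0 <= L * (st2 t * (Ft t - F t) + 2 * ds2 t * F t)) by (apply Rmult_le_pos; lra). lra. }
  assert (Hboot2 : forall t, T1 <= t <= T -> r t <= r T1).
  { apply (boot r rd T1 T M); [lra| |lra|].
    - intros t Ht; apply Hrd; lra.
    - exact Hrneg. }
  assert (He10 : e1 <> 0) by (destruct He1; lra).
  split.
  {
    intros t Ht Hbase. assert (Ht' : 0 <= t <= T) by lra.
    destruct (Habs1 t Ht') as [_ Hpos]. destruct (Habs1 T1 ltac:(lra)) as [_ HposT1].
    assert (Hs1t0 : s1 t <> 0) by (apply Hs_nz; lra). assert (Hs1T0 : s1 T1 <> 0) by (apply Hs_nz; lra).
    set (bs := 1 - Rpower 2 alpha * C1 * Rpower (Rabs (s1 T1)) (2 * alpha) * (t - T1)).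
    assert (Hbs1 : bs <= 1).
    { unfold bs. assert (0 <= Rpower 2 alpha * C1 * Rpower (Rabs (s1 T1)) (2 * alpha) * (t - T1)); [|lra].
      apply Rmult_le_pos; [|lra]. apply Rmult_le_pos; [apply Rmult_le_pos|]; left; try apply rp_pos; auto. }
    assert (HR1 : 1 <= Rpower bs (- beta)).
    { replace 1 with (Rpower 1 (- beta)) at 1 by (unfold Rpower; rewrite ln_1, Rmult_0_r; apply exp_0).
      apply (rp_dec_neg bs 1 (- beta)); [split; [exact Hbase|lra]|lra]. }
    assert (Hrt := Hboot2 t Ht).
    assert (Hds2t : ds2 t = r t * (e1 * s1 t)) by (unfold r; field; auto).
    assert (Hr : ds2 T1 / s1 T1 * s1 t = r T1 * (e1 * s1 t)) by (unfold r; field; auto).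
    rewrite Hds2t, Hr.
    assert (0 < r T1). { unfold r. destruct (Hds T1 ltac:(lra)). apply Rdiv_lt_0_compat; lra. }
    assert (r t * (e1 * s1 t) <= r T1 * (e1 * s1 t)) by (apply Rmult_le_compat_r; lra).
    assert (r T1 * (e1 * s1 t) * 1 <= r T1 * (e1 * s1 t) * Rpower bs (- beta)) by (apply Rmult_le_compat_l; [nra|lra]).
    change (Rpower (1 - K * Rpower (Rabs (s1 T1)) (2 * alpha) * (t - T1)) (- beta)) with (Rpower bs (- beta)).
    lra. }
  {
    destruct (Hds T ltac:(lra)) as [HdT HdT1]. destruct (Hds 0 ltac:(lra)) as [Hd0 _].
    destruct (Habs1 T ltac:(lra)) as [Ha1T Hp1T]. destruct (Habs2 0 ltac:(lra)) as [Ha20 Hp20].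
    assert (Hn1 : eucl_norm (ds1 T) (ds2 T) <= sqrt (1 + mu ^ 2) * ds2 T).
    { assert (Hq1 : ds1 T ^ 2 <= (mu * ds2 T) ^ 2).
      { rewrite <- (pow2_abs (ds1 T)). apply pow_incr; split; [apply Rabs_pos|lra]. }
      assert (0 <= ds1 T ^ 2) by apply pow2_ge_0. assert (0 <= ds2 T ^ 2) by apply pow2_ge_0.
      assert (0 <= mu ^ 2) by apply pow2_ge_0.
      unfold eucl_norm. rewrite <- (sqrt_pow2 (ds2 T)) at 2 by lra. rewrite <- sqrt_mult by lra.
      replace ((mu * ds2 T) ^ 2) with (mu ^ 2 * ds2 T ^ 2) in Hq1 by ring.
      apply sqrt_le_1; try lra; try (apply Rmult_le_pos; lra). }
    assert (Hn2 : ds2 0 <= eucl_norm (ds1 0) (ds2 0)).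
    { assert (0 <= ds1 0 ^ 2) by apply pow2_ge_0. assert (0 <= ds2 0 ^ 2) by apply pow2_ge_0.
      unfold eucl_norm. rewrite <- (sqrt_pow2 (ds2 0)) at 1 by lra. apply sqrt_le_1; lra. }
    assert (HrT := Hboot2 T ltac:(lra)).
    assert (Hp0T1 : p T1 <= p 0) by (apply HpT; lra).
    assert (Hs1T0 : s1 T <> 0) by (apply Hs_nz; lra).
    assert (HdsT : ds2 T = r T * Rabs (s1 T)) by (unfold r; rewrite Ha1T; field; auto).
    assert (Hp0e : p 0 = ds2 0 / Rabs (s2 0)) by (unfold p; rewrite Ha20; reflexivity).
    assert (Hq : ds2 T <= ds2 0 / Rabs (s2 0) * Rabs (s1 T)).
    { rewrite HdsT, <- Hp0e. apply Rmult_le_compat_r; [apply Rabs_pos|]. lra. }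
    rewrite Rabs_div by (apply Hs_nz; lra).
    assert (Hsq : 0 <= sqrt (1 + mu ^ 2)) by apply sqrt_pos.
    assert (H0 : 0 < Rabs (s2 0)) by lra.
    assert (ds2 0 / Rabs (s2 0) * Rabs (s1 T) <= Rabs (s1 T) / Rabs (s2 0) * eucl_norm (ds1 0) (ds2 0)).
    { replace (ds2 0 / Rabs (s2 0) * Rabs (s1 T)) with (Rabs (s1 T) / Rabs (s2 0) * ds2 0) by (field; lra).
      apply Rmult_le_compat_l; [|lra]. apply Rdiv_le_0_compat; [apply Rabs_pos|lra]. }
    assert (sqrt (1 + mu ^ 2) * ds2 T <= sqrt (1 + mu ^ 2) * (Rabs (s1 T) / Rabs (s2 0) * eucl_norm (ds1 0) (ds2 0))).
    { apply Rmult_le_compat_l; lra. }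
    lra. }
Qed.
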